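(* Let $G:[-1,1]\to\mathbb{R}$ be continuous and non-decreasing with $G(0)=0$, $\beta\in\mathbb{R}$, $Z$ a real random variable and $B$ an independent standard Brownian motion. For $\ell\in\mathbb M$ define $\Gamma[\ell]_t:=\mathbb{P}(\tau^\ell\le t)$, $t\ge0$, where $X^\ell_t:=Z+\beta t+B_t-G(\ell_t)$ and $\tau^\ell:=\inf\{t\ge0:X^\ell_t\le0\}$. Then for any $(\ell^n)_{n\ge1}\subset\mathbb M$ and $\ell\in\mathbb M$ with $\lim_{n\to\infty}\hat d(\ell^n,\ell)=0$, $$\limsup_{n\to\infty}\Gamma[\ell^n]_t\le\Gamma[\ell]_t\quad\text{for all }t\ge0.$$
   Context: $\mathbb M$ is the set of non-decreasing càdlàg functions $\ell$ on $[-1,\infty)$ with $\ell_t=0$ for $t\in[-1,0)$ and $\ell_\infty:=\lim_{t\to\infty}\ell_t\le1$. The Lévy distance on $\mathbb M$ is $d(\ell,\ell'):=\inf\{\varepsilon>0:\ \ell_{t+\varepsilon}+\varepsilon\ge\ell'_t\ge\ell_{t-\varepsilon}-\varepsilon\ \forall t\ge0\}$. For $t\ge0$ let $\ell_{t\wedge}$ denote the function $s\mapsto\ell_{\min(t,s)}$, $d_t(\ell,\ell'):=d(\ell_{t\wedge},\ell'_{t\wedge})$, and $\hat d(\ell,\ell'):=\int_0^\infty e^{-t}(d_t(\ell,\ell')\wedge1)\,\mathrm dt$. *)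

(* Defs.v *)
From HB Require Import structures.
From mathcomp Require Import all_boot all_order all_algebra.
From mathcomp Require Import all_classical all_reals all_analysis.
Set Implicit Arguments. Unset Strict Implicit. Unset Printing Implicit Defensive.
Import Order.TTheory GRing.Theory Num.Def Num.Theory.
Import numFieldNormedType.Exports.
Local Open Scope classical_set_scope.
Local Open Scope ring_scope.

Section Defs.
Context {R : realType}.

(* The class M.  Elements are represented as functions R -> R that vanish on
   (-oo,0) (the paper only defines them on [-1,oo), where they vanish on
   [-1,0)). *)
Definition in_M (l : R -> R) : Prop :=
  [/\ (forall t, t < 0 -> l t = 0),
      (forall x y, -1 <= x -> x <= y -> l x <= l y),
      (forall t, -1 <= t -> l x @[x --> t^'+] --> l t),
      (forall t, -1 < t -> cvg (l x @[x --> t^'-])) &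
      exists2 c : R, l x @[x --> +oo] --> c & c <= 1].

Definition levy_d (l l' : R -> R) : R :=
  inf [set e : R | 0 < e /\ forall t, 0 <= t ->
         l' t <= l (t + e) + e /\ l (t - e) - e <= l' t].

Definition stopped (l : R -> R) (t : R) : R -> R := fun s => l (Num.min t s).

Definition levy_dt (t : R) (l l' : R -> R) : R := levy_d (stopped l t) (stopped l' t).

Definition dhat (l l' : R -> R) : \bar R :=
  (\int[lebesgue_measure]_(t in `[0%R, +oo[%classic)
      (expR (- t) * Num.min (levy_dt t l l') 1)%:E)%E.

Context {d : measure_display} {Omega : measurableType d}.

Definition std_brownian (P : probability Omega R) (B : R -> Omega -> R) : Prop :=
  [/\ (forall t, 0 <= t -> measurable_fun setT (B t)),
      (forall w, B 0 w = 0),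
      (forall w, {within `[0%R, +oo[%classic, continuous (fun t => B t w)}) &
      (forall (n : nat) (s : nat -> R) (A : nat -> set R),
         s 0%N = 0 -> (forall i, (i < n)%N -> s i < s i.+1) ->
         (forall i, measurable (A i)) ->
         P (\bigcap_(i in `I_n) [set w | A i (B (s i.+1) w - B (s i) w)]) =
         (\prod_(i < n) normal_prob 0 (Num.sqrt (s i.+1 - s i)) (A i))%E)].

(* The random variable Z is independent of the process B: sigma(Z) and
   sigma(B_t, t >= 0) are independent, tested on the generating pi-system of
   finite-dimensional cylinder events. *)
Definition indep_rv_process (P : probability Omega R) (Z : Omega -> R)
    (B : R -> Omega -> R) : Prop :=
  forall (n : nat) (s : nat -> R) (A0 : set R) (A : nat -> set R),
    (forall i, 0 <= s i) -> measurable A0 -> (forall i, measurable (A i)) ->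
    P ([set w | A0 (Z w)] `&` \bigcap_(i in `I_n) [set w | A i (B (s i) w)]) =
    (P [set w | A0 (Z w)] * P (\bigcap_(i in `I_n) [set w | A i (B (s i) w)]))%E.

Definition Xproc (G : R -> R) (beta : R) (Z : Omega -> R) (B : R -> Omega -> R)
    (l : R -> R) (t : R) (w : Omega) : R :=
  Z w + beta * t + B t w - G (l t).

(* tau^l = inf { t >= 0 : X^l_t <= 0 }  (inf of the empty set = +oo) *)
Definition tau (G : R -> R) (beta : R) (Z : Omega -> R) (B : R -> Omega -> R)
    (l : R -> R) (w : Omega) : \bar R :=
  ereal_inf [set x%:E | x in [set s : R | 0 <= s /\ Xproc G beta Z B l s w <= 0]].

Definition Gamma (P : probability Omega R) (G : R -> R) (beta : R)
    (Z : Omega -> R) (B : R -> Omega -> R) (l : R -> R) (t : R) : \bar R :=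
  P [set w | (tau G beta Z B l w <= t%:E)%E].

End Defs.

(* Main.v *)
Require Import Defs.
From HB Require Import structures.
From mathcomp Require Import all_boot all_order all_algebra.
From mathcomp Require Import all_classical all_reals all_analysis.
From mathcomp Require Import lra.
Import Order.TTheory GRing.Theory Num.Def Num.Theory.
Import numFieldNormedType.Exports.
Local Open Scope classical_set_scope.
Local Open Scope ring_scope.

Section Acc.
Context {R : realType}.
Lemma inM_bound (l : R -> R) : in_M l -> forall x, 0 <= l x /\ l x <= 1.
Proof.
case=> l0 lmono _ _ [c lc c1] x.
have l0' : forall y, 0 <= l y.
  move=> y; have [y0|y0] := ltP y 0; first by rewrite l0.
  rewrite -(l0 (-1)) ?ltrN10 //; apply: lmono => //.
  by rewrite (le_trans _ y0)// lerN10.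
split => //.
have [x0|x0] := ltP x 0; first by rewrite l0.
apply: le_trans c1; rewrite leNgt; apply/negP => cx.
near (+oo : set_system R) => M.
have h1 : l M < l x by near: M; exact: (cvgr_lt _ lc _ cx).
have h2 : x <= M by near: M; apply: nbhs_pinfty_ge; rewrite num_real.
have := lmono x M (le_trans (lerN10 _) x0) h2.
by rewrite leNgt h1.
Unshelve. all: by end_near. Qed.
Lemma invS_le {k p : nat} : (k <= p)%N -> p.+1%:R^-1 <= k.+1%:R^-1 :> R.
Proof. by move=> kp; rewrite lef_pV2 ?posrE // ler_nat ltnS. Qed.

Lemma invS_gt0 (k : nat) : 0 < k.+1%:R^-1 :> R.
Proof. by rewrite invr_gt0. Qed.

Lemma seq_cluster (sq : nat -> R) (a b : R) : (forall k, a <= sq k <= b) ->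
  exists2 z : R, a <= z <= b &
    forall e n, 0 < e -> exists2 p, (n <= p)%N & `|z - sq p| <= e.
Proof.
move=> hab.
have Fin : (sq @ \oo) `[a, b]%classic.
  by exists 0%N => // k _ /=; rewrite in_itv /= hab.
have PF : ProperFilter (sq @ \oo) by apply: fmap_proper_filter.
have [z [/= zin zcl]] := @segment_compact R a b _ PF Fin.
exists z; first by move: zin; rewrite in_itv.
by move=> e n e0; apply: (cluster_eventuallyP sq z).1.
Qed.

Lemma closed_lemma (Y : R -> R) (H : R -> R -> R) (u : R) :
 0 <= u ->
 (forall s, 0 <= s -> forall eps, 0 < eps -> exists2 eta, 0 < eta &
    forall r, 0 <= r -> `|r - s| < eta -> `|Y r - Y s| < eps) ->
 (forall s s' a b, 0 <= s -> s <= s' -> 0 <= a -> a <= b -> H s a <= H s' b) ->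
 (forall s a b, 0 <= s -> 0 <= a -> 0 <= b -> H (s + a) b <= H s (b + a)) ->
 (forall s, 0 <= s -> forall eps, 0 < eps -> exists2 eta, 0 < eta & H s eta <= H s 0 + eps) ->
 (forall del, 0 < del -> exists s, [/\ 0 <= s, s <= u + del & Y s <= H s del + del]) ->
 exists s, [/\ 0 <= s, s <= u & Y s <= H s 0].
Proof.
move=> u0 Yc Hmono Hshift Hrc hyp.
apply/not_existsP => NS.
have NS' : forall s, 0 <= s -> s <= u -> H s 0 < Y s.
  move=> s s0 su; rewrite ltNge; apply/negP => Ys.
  by apply: (NS s); split.
have /choice [sq Hsq] : forall k : nat, exists s,
    [/\ 0 <= s, s <= u + k.+1%:R^-1 & Y s <= H s k.+1%:R^-1 + k.+1%:R^-1].
  by move=> k; apply: hyp; exact: invS_gt0.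
have [z /andP[z0 _] zcl] : exists2 z : R, 0 <= z <= u + 1 &
    forall e n, 0 < e -> exists2 p, (n <= p)%N & `|z - sq p| <= e.
  apply: seq_cluster => k; have [s0 su _] := Hsq k; rewrite s0 /=.
  by rewrite (le_trans su)// lerD2l invf_le1 ?ler1n.
have zu : z <= u.
  rewrite leNgt; apply/negP => uz.
  have g0 : 0 < (z - u) / 2 by rewrite divr_gt0 // subr_gt0.
  have [K] := ltr_add_invr g0; rewrite add0r => HK.
  have [p Kp Hp] := zcl _ K g0.
  have [_ Hs0 _] := Hsq p.
  have Hs : sq p <= u + p.+1%:R^-1 :> R := Hs0.
  have Hz : z - sq p <= (z - u) / 2 by rewrite (le_trans _ Hp)// ler_norm.
  have hp1 : p.+1%:R^-1 < (z - u) / 2 := le_lt_trans (invS_le Kp) HK.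
  set w := p.+1%:R^-1 in Hs hp1.
  lra.
pose eps := (Y z - H z 0) / 3.
have eps0 : 0 < eps by rewrite divr_gt0 // subr_gt0; exact: NS'.
have [eta1 eta10 Heta1] := Yc z z0 eps eps0.
have [eta2 eta20 Heta2] := Hrc z z0 eps eps0.
pose rho := Num.min eta1 eta2 / 2.
have rho0 : 0 < rho by rewrite divr_gt0 // lt_min eta10.
have m1 : Num.min eta1 eta2 <= eta1 by rewrite ge_min lexx.
have m2 : Num.min eta1 eta2 <= eta2 by rewrite ge_min lexx orbT.
have rho1 : rho < eta1 by rewrite /rho; lra.
have rho2 : 2 * rho <= eta2 by rewrite /rho; lra.
have mpos : 0 < Num.min rho eps by rewrite lt_min rho0 eps0.
have [K] := ltr_add_invr mpos; rewrite add0r => HK.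
have [p Kp Hp] := zcl _ K rho0.
have [sp0 _ Hsp] := Hsq p.
set del := p.+1%:R^-1 in Hsp.
have del0 : 0 < del by exact: invS_gt0.
have delK : del < Num.min rho eps := le_lt_trans (invS_le Kp) HK.
move: delK; rewrite lt_min => /andP[delr dele].
have Y1 : `|sq p - z| < eta1 by rewrite distrC (le_lt_trans Hp).
have HY0 := Heta1 _ sp0 Y1.
have HY : Y z - Y (sq p) < eps by have := ler_norm (Y z - Y (sq p)); rewrite distrC; lra.
have Hup : sq p <= z + rho by have := ler_norm (sq p - z); rewrite distrC; lra.
have H1 : H (sq p) del <= H (z + rho) del by apply: Hmono => //; exact: ltW.
have H2 : H (z + rho) del <= H z (del + rho) by apply: Hshift => //; exact: ltW.
have H3 : H z (del + rho) <= H z eta2.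
  by apply: Hmono => //; lra.
have : H z 0 + 3 * eps = Y z by rewrite /eps; lra.
lra.
Qed.
Lemma within_eps (f : R -> R) : {within `[0, +oo[%classic, continuous f} ->
  forall s, 0 <= s -> forall eps, 0 < eps -> exists2 eta, 0 < eta &
    forall r, 0 <= r -> `|r - s| < eta -> `|f r - f s| < eps.
Proof.
move=> cf s s0 eps e0.
have As : `[0, +oo[%classic s by rewrite /= in_itv /= s0.
have := (subspace_continuousP _ _).1 cf s As.
move=> /cvgrPdist_lt /(_ eps e0).
rewrite near_withinE => /nbhs_ballP [eta eta0 Heta].
exists eta => // r r0 rs.
rewrite distrC; apply: Heta; last by rewrite /= in_itv /= r0.
by rewrite /ball /= distrC.
Qed.

Lemma path_eps (b : R -> R) (c beta : R) :
  {within `[0, +oo[%classic, continuous b} ->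
  forall s, 0 <= s -> forall eps, 0 < eps -> exists2 eta, 0 < eta &
    forall r, 0 <= r -> `|r - s| < eta ->
      `|(c + beta * r + b r) - (c + beta * s + b s)| < eps.
Proof.
move=> cb; apply: (@within_eps (fun r => c + beta * r + b r)).
have -> : (fun r => c + beta * r + b r) = (fun r => c + beta * r) + b by [].
apply: within_continuousD => //.
apply: continuous_subspaceT => x.
apply: cvgD; first exact: cvg_cst.
by apply: cvgMl_tmp; exact: cvg_id.
Qed.

Lemma within_epsA (A : set R) (f : R -> R) : {within A, continuous f} ->
  forall s, A s -> forall eps, 0 < eps -> exists2 eta, 0 < eta &
    forall r, A r -> `|r - s| < eta -> `|f r - f s| < eps.
Proof.
move=> cf s As eps e0.
have := (subspace_continuousP _ _).1 cf s As.
move=> /cvgrPdist_lt /(_ eps e0).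
rewrite near_withinE => /nbhs_ballP [eta eta0 Heta].
exists eta => // r Ar rs.
rewrite distrC; apply: Heta => //.
by rewrite /ball /= distrC.
Qed.

Lemma right_eps (l : R -> R) (s : R) : l x @[x --> s^'+] --> l s ->
  forall eps, 0 < eps -> exists2 eta, 0 < eta &
    forall r, s < r -> r - s < eta -> `|l r - l s| < eps.
Proof.
move=> /cvgrPdist_lt H eps e0; have := H eps e0.
rewrite near_withinE => /nbhs_ballP [eta eta0 Heta].
exists eta => // r sr rs.
rewrite distrC; apply: Heta => //.
by rewrite /ball /= distrC gtr0_norm // subr_gt0.
Qed.

Definition Hf (G l : R -> R) (s d : R) := G (Num.min (l (s + d) + d) 1).

Section HProps.
Variables (G l : R -> R).
Hypothesis Gc : {within `[-1, 1]%classic, continuous G}.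
Hypothesis Gm : forall x y, -1 <= x -> x <= y -> y <= 1 -> G x <= G y.
Hypothesis lM : in_M l.

Lemma minl_in s {d} : 0 <= d -> -1 <= Num.min (l (s + d) + d) 1 /\ Num.min (l (s + d) + d) 1 <= 1.
Proof.
move=> d0; have [h0 h1] := inM_bound l lM (s + d); split; last by rewrite ge_min lexx orbT.
by rewrite le_min (le_trans (lerN10 _)) ?ler0N1 //= addr_ge0.
Qed.

Lemma Hf_mono s s' a b : 0 <= s -> s <= s' -> 0 <= a -> a <= b -> Hf G l s a <= Hf G l s' b.
Proof.
move=> s0 ss' a0 ab; rewrite /Hf.
have [i1 i2] := minl_in s a0.
have [i3 i4] := minl_in s' (le_trans a0 ab).
apply: Gm => //.
have lm : l (s + a) <= l (s' + b).
  by case: lM => _ lmono _ _ _; apply: lmono; [lra|lra].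
rewrite le_min !ge_min lexx !orbT andbT.
by apply/orP; left; lra.
Qed.

Lemma Hf_shift s a b : 0 <= s -> 0 <= a -> 0 <= b -> Hf G l (s + a) b <= Hf G l s (b + a).
Proof.
move=> s0 a0 b0; rewrite /Hf.
have e : s + (b + a) = s + a + b by rewrite [b + a]addrC addrA.
have [i1 i2] := minl_in (s + a) b0.
have [i3 i4] := minl_in s (addr_ge0 b0 a0).
rewrite e in i3 i4 *.
apply: Gm => //.
rewrite le_min !ge_min lexx !orbT andbT.
by apply/orP; left; lra.
Qed.

Lemma Hf0 s : Hf G l s 0 = G (l s).
Proof. by rewrite /Hf !addr0; have [_ h1] := inM_bound l lM s; rewrite min_l. Qed.

Lemma Hf_rc s : 0 <= s -> forall eps, 0 < eps -> exists2 eta, 0 < eta & Hf G l s eta <= Hf G l s 0 + eps.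
Proof.
move=> s0 eps e0; rewrite Hf0.
have [h0 h1] := inM_bound l lM s.
have Ain : `[-1, 1]%classic (l s) by rewrite /= in_itv /=; apply/andP; split => //; lra.
have [gam gam0 Hgam] := within_epsA _ _ Gc _ Ain _ e0.
case: lM => _ lmono lrc _ _.
have g2 : 0 < gam / 2 by rewrite divr_gt0.
have [eta1 eta10 Heta1] := right_eps _ _ (lrc s (le_trans (lerN10 _) s0)) _ g2.
pose eta := Num.min (eta1 / 2) (gam / 2).
have eta0 : 0 < eta by rewrite lt_min g2 andbT divr_gt0.
have m1 : eta <= eta1 / 2 by rewrite ge_min lexx.
have m2 : eta <= gam / 2 by rewrite ge_min lexx orbT.
exists eta => //.
have [i1 i2] := minl_in s (ltW eta0).
have Hl := Heta1 (s + eta) ltac:(lra) ltac:(lra).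
have lmon : l s <= l (s + eta) by apply: lmono; lra.
have Hx : `|Num.min (l (s + eta) + eta) 1 - l s| < gam.
  have : l s <= Num.min (l (s + eta) + eta) 1 by rewrite le_min h1 andbT; lra.
  have : Num.min (l (s + eta) + eta) 1 <= l (s + eta) + eta by rewrite ge_min lexx.
  have := ler_norm (l (s + eta) - l s).
  move: (Num.min _ _) => x h3 h4 h5; rewrite ger0_norm ?subr_ge0 //; lra.
have Ain2 : `[-1, 1]%classic (Num.min (l (s + eta) + eta) 1).
  by rewrite /= in_itv /=; apply/andP; split.
have := Hgam _ Ain2 Hx; rewrite /Hf.
move: (G _) => y; have := ler_norm (y - G (l s)); lra.
Qed.
End HProps.

End Acc.

Import HBNNSimple.

Lemma le_int_nnsfun {R : realType} d (T : measurableType d) (mu : {measure set T -> \bar R})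
  (D : set T) (mD : measurable D) (h : {nnsfun T >-> R}) (f : T -> \bar R) :
  (forall x, D x -> (0 <= f x)%E) -> (forall x, D x -> ((h x)%:E <= f x)%E) ->
  (\int[mu]_(x in D) (h x)%:E <= \int[mu]_(x in D) f x)%E.
Proof.
move=> f0 hf.
rewrite integral_nnsfun // ge0_integralE //.
apply: ereal_sup_ubound => /=; exists (proj_nnsfun h mD).
  move=> x /=; rewrite measurable_realfun.mindicE /patch /indic /=; case: ifPn => xD.
    by rewrite mulr1; apply: hf; move: xD; rewrite inE.
  by rewrite mulr0.
apply: eq_sintegral => x /=; rewrite measurable_realfun.mindicE /patch /indic /=; case: ifPn => xD.
  by rewrite mulr1.
by rewrite mulr0.
Qed.

Lemma int_lb {R : realType} (f : R -> R) (a c : R) : 0 <= a -> 0 <= c ->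
  (forall x, 0 <= x -> 0 <= f x) ->
  (forall x, a <= x -> x <= a + 1 -> c <= f x) ->
  (c%:E <= \int[lebesgue_measure]_(x in `[0%R, +oo[%classic) (f x)%:E)%E.
Proof.
move=> a0 c0 f0 fc.
have mA : @measurable _ (measurableTypeR R) (`[a, a + 1]%classic : set R) by exact: measurable_itv.
have mD : @measurable _ (measurableTypeR R) (`[0%R, +oo[%classic : set R) by exact: measurable_itv.
have HH := @le_int_nnsfun R _ _ lebesgue_measure _ mD
   (@scale_nnsfun _ (measurableTypeR R) R (@indic_nnsfun _ (measurableTypeR R) R _ mA) c c0) (fun x => (f x)%:E).
apply: le_trans (HH _ _); last first.
- move=> x; rewrite /= in_itv /= andbT => x0.
  have -> : measurable_realfun.mindic R mA x = \1_(`[a, a + 1]%classic) x by [].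
  rewrite /indic /=; have [xA|xA] := boolP (x \in (`[a, a + 1]%classic : set R)).
    move: (xA); rewrite inE /= in_itv /= => /andP[ax xa].
    by rewrite mulr1 lee_fin fc.
  by rewrite mulr0 lee_fin; apply: f0.
- by move=> x; rewrite /= in_itv /= andbT => x0; rewrite lee_fin f0.
rewrite le_eqVlt; apply/orP; left; apply/eqP.
transitivity (\int[lebesgue_measure]_(x in `[0%R, +oo[%classic) (c * \1_(`[a, a + 1]%classic) x)%:E)%E; last first.
  by apply: eq_integral => x _; rewrite /= measurable_realfun.mindicE.
rewrite (@integralZl_indic _ _ _ lebesgue_measure _ mD (fun _ => `[a, a + 1]%classic) c) //; last first.
  by move=> c0'; have := lt_le_trans c0' c0; rewrite ltxx.
rewrite integral_indic // setIidl; last first.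
  by move=> x /=; rewrite !in_itv /= => /andP[ax _]; rewrite andbT (le_trans a0 ax).
have L : lebesgue_measure (`[a, a + 1]%classic : set R) = 1%E.
  rewrite lebesgue_measure_itv /= lte_fin ltrDl ltr01.
  by rewrite -EFinD addrAC subrr add0r.
transitivity (c%:E * 1%E)%E; first by rewrite mule1.
congr (_ * _)%E; exact: (esym L).
Qed.


Section S7.
Context {R : realType} {d : measure_display} {Omega : measurableType d}.
Variables (G : R -> R) (beta : R) (Z : Omega -> R) (B : R -> Omega -> R).
Hypothesis Gc : {within `[-1, 1]%classic, continuous G}.
Hypothesis Gm : forall x y, -1 <= x -> x <= y -> y <= 1 -> G x <= G y.
Hypothesis Bc : forall w, {within `[0, +oo[%classic, continuous (fun s => B s w)}.

Lemma approx_exists (l : R -> R) (w : Omega) (t : R) : in_M l -> 0 <= t ->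
  (forall del, 0 < del -> exists s, [/\ 0 <= s, s <= t + del &
     Z w + beta * s + B s w <= Hf G l s del + del]) ->
  exists s, [/\ 0 <= s, s <= t & Z w + beta * s + B s w <= G (l s)].
Proof.
move=> lM t0 hyp.
have [s [s0 st Ys]] : exists s, [/\ 0 <= s, s <= t &
    Z w + beta * s + B s w <= Hf G l s 0].
  apply: (@closed_lemma _ (fun s => Z w + beta * s + B s w) (Hf G l) t t0) => //.
  + by move=> s s0 eps e0; apply: (path_eps (fun r => B r w) (Z w) beta (Bc w) s s0 eps e0).
  + by move=> s s' a b s0 ss' a0 ab; apply: Hf_mono.
  + by move=> s a b s0 a0 b0; apply: Hf_shift.
  + by move=> s s0; apply: Hf_rc.
by exists s; split => //; rewrite -(Hf0 G l lM).
Qed.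

Lemma tau_le (l : R -> R) (w : Omega) (t : R) : in_M l -> 0 <= t ->
  (tau G beta Z B l w <= t%:E)%E <->
  exists s, [/\ 0 <= s, s <= t & Z w + beta * s + B s w <= G (l s)].
Proof.
move=> lM t0; split.
- move=> Ht; apply: approx_exists => // del del0.
  have : (tau G beta Z B l w < (t + del)%:E)%E.
    by apply: (le_lt_trans Ht); rewrite lte_fin ltrDl.
  move=> /ereal_inf_lt [_ [s [s0 Xs] <-]].
  rewrite lte_fin => sl.
  exists s; split => //; first exact: ltW.
  have h1 : Hf G l s 0 <= Hf G l s del by apply: Hf_mono => //; exact: ltW.
  have e0 := Hf0 G l lM s.
  move: Xs; rewrite /Xproc => Xs.
  lra.
- move=> [s [s0 st Ys]].
  apply: le_trans (_ : (s%:E <= t%:E)%E); last by rewrite lee_fin.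
  apply: ereal_inf_lbound; exists s => //; split => //.
  by rewrite /Xproc subr_le0.
Qed.

Lemma Ev_meas (l : R -> R) (t : R) : in_M l -> 0 <= t ->
  measurable_fun setT Z -> (forall q, 0 <= q -> measurable_fun setT (B q)) ->
  measurable [set w | (tau G beta Z B l w <= t%:E)%E].
Proof.
move=> lM t0 mZ mB.
pose F (m : nat) (q : rat) := [set w | (0 <= (ratr q : R) /\ (ratr q : R) <= t + m.+1%:R^-1) /\
   Z w + beta * (ratr q : R) + B ((ratr q : R)) w <= G (l ((ratr q : R))) + m.+1%:R^-1].
have -> : [set w | (tau G beta Z B l w <= t%:E)%E] = \bigcap_m \bigcup_q F m q.
  apply/seteqP; split => w /=.
  - move=> /(tau_le l w t lM t0) [s [s0 st Ys]] m _.
    rewrite /F /=.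
    have m0 : 0 < m.+1%:R^-1 :> R := invS_gt0 m.
    move: m0; set v := m.+1%:R^-1 => m0.
    have [eta eta0 Heta] := path_eps (fun r => B r w) (Z w) beta (Bc w) s s0 _ m0.
    have mpos : s < s + Num.min eta v by rewrite ltrDl lt_min eta0 m0.
    have [q] := rat_in_itvoo mpos.
    rewrite in_itv /= => /andP[sq qs].
    have m1 : Num.min eta v <= eta by rewrite ge_min lexx.
    have m2 : Num.min eta v <= v by rewrite ge_min lexx orbT.
    exists q => //; split; first by split; lra.
    have q0 : 0 <= ratr q :> R by lra.
    have := Heta (ratr q) q0 ltac:(rewrite gtr0_norm; lra).
    have Gl : G (l s) <= G (l (ratr q)).
      rewrite -(Hf0 G l lM s) -(Hf0 G l lM (ratr q)).
      by apply: Hf_mono => //; lra.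
    move: (ratr q) Gl => r Gl H1; have := ler_norm (Z w + beta * r + B r w - (Z w + beta * s + B s w)).
    lra.
  - move=> H; apply/(tau_le l w t lM t0); apply: approx_exists => // del del0.
    have [K] := ltr_add_invr del0; rewrite add0r => HK.
    have [q _ [[q0 qt] Yq]] := H K I.
    exists (ratr q); split => //; first by set w' := K.+1%:R^-1 in qt HK; lra.
    have h1 : Hf G l (ratr q) 0 <= Hf G l (ratr q) del by apply: Hf_mono => //; lra.
    have := Hf0 G l lM (ratr q).
    set w' := K.+1%:R^-1 in Yq HK; lra.
apply: bigcapT_measurable => m; apply: bigcupT_measurable_rat => q.
have [hq|hq] := pselect (0 <= (ratr q : R) /\ (ratr q : R) <= t + m.+1%:R^-1).
- have -> : F m q = setT `&` [set w | Z w + beta * ratr q + B (ratr q) w <=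
      cst (G (l (ratr q)) + m.+1%:R^-1) w].
    by apply/seteqP; split => w /=; [case => _ H; split|case => _ H; split].  
  apply: (measurable_fun_le measurableT); last exact: measurable_cst.
  apply: measurable_realfun.measurable_funD; last exact: mB (proj1 hq).
  apply: measurable_realfun.measurable_funD => //; exact: measurable_cst.
- have -> : F m q = set0 by apply/seteqP; split => w //= [].
  exact: measurable0.
Qed.
End S7.

Section S9.
Context {R : realType}.

Definition b01 (f : R -> R) := forall x, 0 <= f x /\ f x <= 1.

Lemma stopped_b01 (f : R -> R) s : in_M f -> b01 (stopped f s).
Proof. by move=> fM x; exact: (inM_bound f fM). Qed.

Lemma levy_ne (f g : R -> R) : b01 f -> b01 g ->
  [set e : R | 0 < e /\ forall t, 0 <= t ->
     g t <= f (t + e) + e /\ f (t - e) - e <= g t] 1.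
Proof.
move=> bf bg; split => // u u0.
have [f1 f2] := bf (u + 1); have [f3 f4] := bf (u - 1); have [g1 g2] := bg u.
split; lra.
Qed.

Lemma levy_ge0 (f g : R -> R) : b01 f -> b01 g -> 0 <= levy_d f g.
Proof.
move=> bf bg; apply: lb_le_inf; first by exists 1; exact: (levy_ne f g bf bg).
by move=> e [e0 _]; exact: ltW.
Qed.

Lemma levy_lt (f g : R -> R) (del : R) : b01 f -> b01 g -> levy_d f g < del ->
  exists e, [/\ 0 < e, e < del & forall t, 0 <= t ->
     g t <= f (t + e) + e /\ f (t - e) - e <= g t].
Proof.
move=> bf bg /(inf_lt (ex_intro _ 1 (levy_ne f g bf bg))) [e [e0 He] edel].
by exists e; split.
Qed.

Lemma dhat_approx (ls : nat -> R -> R) (l : R -> R) (t : R) :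
  (forall n, in_M (ls n)) -> in_M l ->
  (fun n => dhat (ls n) l) @ \oo --> 0%E -> 0 <= t ->
  forall del, 0 < del -> exists N, forall n, (N <= n)%N ->
    exists e, [/\ 0 < e, e <= del & forall v, 0 <= v -> v <= t ->
      ls n v <= l (v + e) + e].
Proof.
move=> lsM lM hd t0 del del0.
pose c := Num.min del 1.
have c0 : 0 < c by rewrite lt_min del0 ltr01.
have cdel : c <= del by rewrite ge_min lexx.
have c1 : c <= 1 by rewrite ge_min lexx orbT.
pose kap := expR (- (t + 1)) * c.
have kap0 : 0 < kap by rewrite mulr_gt0 // expR_gt0.
have [hfin hcv] := (fine_cvgP _ _).1 hd.
have hev : \forall n \near \oo, fine (dhat (ls n) l) < kap.
  exact: (cvgr_lt _ hcv _ kap0).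
have [N _ HN] := filterI hfin hev.
exists N => n Nn.
have [fn hn] := HN n Nn.
have [s [ts st1 Ls]] : exists s, [/\ t <= s, s <= t + 1 &
    Num.min (levy_dt s (ls n) l) 1 < c].
  case: (pselect (exists s, [/\ t <= s, s <= t + 1 &
    Num.min (levy_dt s (ls n) l) 1 < c])) => // Hn; exfalso.
  have : (kap%:E <= dhat (ls n) l)%E.
    apply: (int_lb (fun x => expR (- x) * Num.min (levy_dt x (ls n) l) 1) t kap t0 (ltW kap0)).
    - move=> x x0; apply: mulr_ge0; first exact: expR_ge0.
      rewrite le_min ler01 andbT; apply: levy_ge0; exact: stopped_b01.
    - move=> x tx xt; apply: ler_pM; [exact: expR_ge0|exact: ltW|by rewrite ler_expR lerN2|].
      rewrite leNgt; apply/negP => hx; apply: Hn; exists x; split => //.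
  rewrite -(fineK fn) lee_fin => h; lra.
have Lc : levy_dt s (ls n) l < c.
  move: Ls; rewrite gt_min => /orP[//|h]; lra.
have [e [e0 ec He]] := levy_lt _ _ _ (stopped_b01 _ s (lsM n)) (stopped_b01 _ s lM) Lc.
exists e; split => //; first lra.
move=> v v0 vt.
have [_ H2] := He (v + e) ltac:(lra).
move: H2; rewrite /stopped addrK (min_r (_ : v <= s)); last lra.
have : l (Num.min s (v + e)) <= l (v + e).
  case: lM => _ lmono _ _ _; apply: lmono; last by rewrite ge_min lexx orbT.
  by rewrite le_min; apply/andP; split; lra.
lra.
Qed.
End S9.

Theorem lemma3p1 (R : realType) (d : measure_display) (Omega : measurableType d)
    (P : probability Omega R) (G : R -> R) (beta : R) (Z : Omega -> R)
    (B : R -> Omega -> R) (ls : nat -> R -> R) (l : R -> R) :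
  {within `[-1, 1]%classic, continuous G} ->
  (forall x y, -1 <= x -> x <= y -> y <= 1 -> G x <= G y) ->
  G 0 = 0 ->
  measurable_fun setT Z ->
  std_brownian P B ->
  indep_rv_process P Z B ->
  (forall n, in_M (ls n)) ->
  in_M l ->
  (fun n => dhat (ls n) l) @ \oo --> 0%E ->
  forall t : R, 0 <= t ->
    (limn_esup (fun n => Gamma P G beta Z B (ls n) t) <= Gamma P G beta Z B l t)%E.
Proof.
move=> Gc Gm _ mZ [mB _ Bc _] _ lsM lM hd t t0.
pose A n := [set w | (tau G beta Z B (ls n) w <= t%:E)%E].
pose Ainf := [set w | (tau G beta Z B l w <= t%:E)%E].
have mA n : measurable (A n) by exact: (Ev_meas G beta Z B Gc Gm Bc (ls n) t (lsM n) t0 mZ mB).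
have mAinf : measurable Ainf by exact: (Ev_meas G beta Z B Gc Gm Bc l t lM t0 mZ mB).
pose U N := \bigcup_(n in [set k | (N <= k)%N]) A n.
have mU N : measurable (U N) by apply: bigcup_measurable => n _; exact: mA.
have sub : \bigcap_N U N `<=` Ainf.
  move=> w Hw; apply/(tau_le G beta Z B Gc Gm Bc l w t lM t0).
  apply: (approx_exists G beta Z B Gc Gm Bc) => // del del0.
  have [N HN] := dhat_approx ls l t lsM lM hd t0 del del0.
  have [n Nn wAn] := Hw N I.
  have [s [s0 st Ys]] := (tau_le G beta Z B Gc Gm Bc (ls n) w t (lsM n) t0).1 wAn.
  have [e [e0 edel He]] := HN n Nn.
  exists s; split => //; first lra.
  have h1 : G (ls n s) <= Hf G l s e.
    rewrite /Hf; have [b1 b2] := inM_bound (ls n) (lsM n) s.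
    have [m1 m2] := minl_in l lM s (ltW e0).
    apply: Gm => //; first lra.
    by rewrite le_min b2 andbT He.
  have h2 : Hf G l s e <= Hf G l s del by apply: (Hf_mono G l Gm lM) => //; exact: ltW.
  lra.
have cvU : (P \o U) @ \oo --> P (\bigcap_N U N).
  apply: nonincreasing_cvg_mu => //.
  - by apply: (le_lt_trans (probability_le1 P (mU 0%N))); rewrite ltry.
  - exact: bigcapT_measurable.
  - move=> n m nm; apply/subsetPset => w [k /= mk Ak]; exists k => //=.
    exact: leq_trans nm mk.
rewrite limn_esup_lim.
apply: le_trans (_ : (P (\bigcap_N U N) <= P Ainf)%E); last first.
  by apply: le_measure => //; rewrite inE //; exact: bigcapT_measurable.
apply: (lee_cvg_to _ cvU).
  exact: is_cvg_esups.
apply: nearW => N /=.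
apply: ge_ereal_sup => _ [k /= Nk <-].
apply: le_measure; rewrite ?inE; [exact: (mA k)|exact: (mU N)|].
by move=> w Aw; exists k.
Qed.
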